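(* Let $G$ be a finite, simple, connected plane graph of minimum degree $3$ in which no two distinct triangles (cycles of length $3$) share an edge. Let $f$ be the number of faces of $G$ and $f_3$ the number of triangular faces of $G$ (faces whose boundary is a cycle of length $3$). Then $f_3 < \tfrac{2}{3} f$.
   Context: A plane graph is a planar graph together with a fixed embedding in the plane; its faces are the connected components of the complement of the embedding in the plane (including the unbounded face). *)

(* Defs.v *)
(* A finite connected plane graph is represented by its
   combinatorial map (rotation system): a finite set of darts D (half-edges),
   a fixed-point-free involution [a] (the other half of the same edge) and a
   permutation [s] (the cyclic order of darts around their vertex, given by
   the embedding).  Vertices = s-orbits, edges = a-orbits, faces = orbits of
   the face permutation [s \o a].  The map is planar (genus 0) iff it is
   connected and satisfies Euler's formula V - E + F = 2. *)
From mathcomp Require Import all_boot.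
Set Implicit Arguments. Unset Strict Implicit. Unset Printing Implicit Defensive.

Section PlaneMap.
Variables (D : finType) (a s : D -> D).

Definition face_perm : D -> D := fun d => s (a d).

Definition map_step : rel D := fun x y => (y == a x) || (y == s x).

Definition same_vertex (x y : D) : bool := fconnect s x y.

Definition n_vertices : nat := fcard s D.
Definition n_edges : nat := fcard a D.
Definition n_faces : nat := fcard face_perm D.

Definition plane_map : Prop :=
  [/\ injective s,
      (forall d, a (a d) = d),
      (forall d, a d != d),
      (forall x y, connect map_step x y) &
      n_vertices + n_faces = n_edges + 2].

(* the underlying graph is simple: no loops, no multiple edges *)
Definition simple_map : Prop :=
  (forall d, ~~ same_vertex d (a d)) /\
  (forall d e, same_vertex d e -> same_vertex (a d) (a e) -> d = e).

(* degree of the vertex carrying dart d (number of darts at it; no loops) *)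
Definition degree (d : D) : nat := order s d.

Definition min_degree3 : Prop :=
  (forall d, 3 <= degree d) /\ (exists d, degree d = 3).

Definition adj (x y : D) : Prop :=
  exists d, same_vertex x d /\ same_vertex y (a d).

(* no two distinct triangles share an edge: if xyz and xyw are triangles
   sharing the edge xy then z and w are the same vertex *)
Definition no_edge_sharing_triangles : Prop :=
  forall x y z w, adj x y -> adj y z -> adj z x -> adj y w -> adj w x ->
    same_vertex z w.

(* number of triangular faces: faces whose boundary walk has length 3 (in a
   simple graph this boundary is a 3-cycle) *)
Definition n_tri_faces : nat :=
  fcard face_perm [pred d | order face_perm d == 3].

End PlaneMap.

(* Main.v *)
Require Import Defs.
From mathcomp Require Import all_boot.
From mathcomp Require Import zify.
Set Implicit Arguments. Unset Strict Implicit. Unset Printing Implicit Defensive.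

Section Proof4.
Variables (D : finType) (a s : D -> D).
Hypotheses (sinj : injective s) (aa : forall d, a (a d) = d) (na : forall d, a d != d).
Hypotheses (Hnl : forall d, ~~ same_vertex s d (a d))
  (Hsv : forall d e, same_vertex s d e -> same_vertex s (a d) (a e) -> d = e).
Hypothesis deg : forall d, 3 <= order s d.
Hypothesis nes : no_edge_sharing_triangles a s.

Let p := face_perm a s.
Lemma pinj : injective p.
Proof. by move=> x y; rewrite /p /face_perm => /sinj; apply: (inv_inj aa). Qed.

Lemma sv_sym x y : same_vertex s x y -> same_vertex s y x.
Proof. by rewrite /same_vertex fconnect_sym. Qed.
Lemma sv_trans x y z : same_vertex s x y -> same_vertex s y z -> same_vertex s x z.
Proof. exact: connect_trans. Qed.
Lemma sv_s x : same_vertex s x (s x).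
Proof. exact: fconnect1. Qed.
Lemma sv_refl x : same_vertex s x x.
Proof. exact: connect0. Qed.

Lemma tri3 x : order p x = 3 -> s (a (s (a (s (a x))))) = x.
Proof. by move=> h; have := iter_order pinj x; rewrite h. Qed.

Lemma key d : order p d = 3 -> order p (s d) = 3 -> False.
Proof.
move=> /tri3 H1 /tri3 H2.
set e := s d in H2.
set pd := s (a d) in H1. set p2 := s (a pd) in H1.
set pe := s (a e) in H2. set p2e := s (a pe) in H2.
have S1 : a p2e = d by apply: sinj; rewrite H2.
have S2 : p2e = a d by rewrite -S1 aa.
have Z : same_vertex s (a pd) (a e).
  apply: (nes (x := d) (y := a d)).
  - by exists d; split; apply: sv_refl.
  - by exists pd; split; [apply: sv_s | apply: sv_refl].
  - exists p2; split; first exact: sv_s.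
    by apply: sv_sym; have := sv_s (a p2); rewrite H1.
  - exists (a pe); split; last by rewrite aa; apply: sv_s.
    by rewrite -S2; apply: sv_sym; apply: sv_s.
  - by exists (a e); split; [apply: sv_refl | rewrite aa; apply: sv_s].
have E : e = a p2.
  apply: Hsv.
    apply: (sv_trans (y := d)); first by apply: sv_sym; apply: sv_s.
    by apply: sv_sym; have := sv_s (a p2); rewrite H1.
  by rewrite aa; apply: (sv_trans (sv_sym Z)); apply: sv_s.
have ss : iter 2 s d = d by rewrite /= -/e E H1.
have := findex_iter (f := s) (x := d) (i := 2) (deg d).
by rewrite ss findex0.
Qed.

Lemma nonT_root r : froots s r ->
  1 < #|[pred d | (order p d != 3) && (froot s d == r)]|.
Proof.
move=> /eqP rr.
have two i j : i < j < order s r -> order p (iter i s r) != 3 ->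
    order p (iter j s r) != 3 ->
    1 < #|[pred d | (order p d != 3) && (froot s d == r)]|.
  move=> /andP[ij jk] ti tj; apply/card_gt1P.
  exists (iter i s r), (iter j s r); split.
  - rewrite inE ti /= -{2}rr (root_connect (fconnect_sym sinj)) fconnect_sym //.
    exact: fconnect_iter.
  - rewrite inE tj /= -{2}rr (root_connect (fconnect_sym sinj)) fconnect_sym //.
    exact: fconnect_iter.
  - apply/eqP => E; have := findex_iter (ltn_trans ij jk).
    by rewrite E findex_iter // => ji; rewrite ji ltnn in ij.
have step i : order p (iter i s r) = 3 -> order p (iter i.+1 s r) != 3.
  by move=> h; apply/eqP => h'; apply: (key h h').
have k3 := deg r.
case: (ltngtP (order s r) 3) => hk.
- by rewrite ltnNge k3 in hk.
- have [i0 [hi0 ti0]] : exists i, i < 2 /\ order p (iter i s r) != 3.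
    case: (eqVneq (order p (iter 0 s r)) 3) => h; last by exists 0.
    by exists 1; split => //; apply: step h.
  have [j0 [hj0 tj0]] : exists i, 1 < i < 4 /\ order p (iter i s r) != 3.
    case: (eqVneq (order p (iter 2 s r)) 3) => h; last by exists 2.
    by exists 3; split => //; apply: step h.
  apply: (two i0 j0) => //; apply/andP; split.
    by case/andP: hj0 => h1 _; apply: leq_trans h1.
  by case/andP: hj0 => _ h2; apply: leq_trans hk.
- have i3 : iter 3 s r = r by rewrite -{1}hk iter_order.
  case: (eqVneq (order p (iter 0 s r)) 3) => h0.
    have h1 := step 0 h0.
    have h2 : order p (iter 2 s r) != 3.
      by apply/eqP => h2; have := step 2 h2; rewrite i3 /= h0.
    by apply: (two 1 2) => //; rewrite hk.
  case: (eqVneq (order p (iter 1 s r)) 3) => h1.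
    apply: (two 0 2) => //; last exact: (step 1 h1).
  by apply: (two 0 1) => //; rewrite hk.
Qed.

Lemma count_nonT : 2 * n_vertices s <= #|[pred d | order p d != 3]|.
Proof.
rewrite -sum1_card (partition_big (froot s) (froots s)); last first.
  by move=> d _; apply: (roots_root (fconnect_sym sinj)).
apply: (@leq_trans (\sum_(r | froots s r) 2)).
  rewrite sum_nat_const mulnC /n_vertices /n_comp_mem; apply: eq_leq; congr (_ * _).
  by apply: eq_card => x; rewrite !inE andbT.
apply: leq_sum => r rr; rewrite sum1_card.
exact: nonT_root rr.
Qed.

Lemma card_T : 3 * n_tri_faces a s = #|[pred d | order p d == 3]|.
Proof.
rewrite mulnC /n_tri_faces; apply: (fcard_order_set pinj).
  by apply/subsetP => x.
move=> x y /eqP <-; rewrite !inE.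
suff -> : order p (p x) = order p x by [].
apply: eq_card => z; exact: (esym (same_fconnect1 pinj x z)).
Qed.

Lemma card_D : #|D| = 2 * n_edges a.
Proof.
have ainj : injective a by apply: (inv_inj aa).
rewrite mulnC /n_edges; symmetry.
have := (@fcard_order_set _ a ainj 2 predT).
rewrite (eq_card (B := predT)) //; apply.
  apply/subsetP => x _; rewrite inE.
  apply/eqP; rewrite (@order_cycle _ _ [:: x; a x]) //=.
  - by rewrite aa !eqxx.
  - by rewrite inE eq_sym na.
  - by rewrite inE eqxx.
by move=> x y.
Qed.
End Proof4.

Theorem theorem4 (D : finType) (a s : D -> D) :
  plane_map a s -> simple_map a s -> min_degree3 s ->
  no_edge_sharing_triangles a s ->
  3 * n_tri_faces a s < 2 * n_faces a s.
Proof.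
move=> [sinj aa na _ euler] [Hnl Hsv] [deg _] nes.
have h1 := count_nonT sinj aa Hsv deg nes.
have h2 := card_T sinj aa.
have h3 := card_D aa na.
have h4 : #|[pred d | order (face_perm a s) d == 3]|
        + #|[pred d | order (face_perm a s) d != 3]| = #|D|.
  rewrite -(cardC [pred d | order (face_perm a s) d == 3]); congr (_ + _).
rewrite h2.
move: h1 h3 h4 euler.
set T := #|[pred d | _ == 3]|; set N := #|[pred d | _ != 3]|.
lia.
Qed.
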